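(* Let $(L,M,N,P)$ be a crossed square with maps $\lambda,\lambda',\mu,\nu$ and function $h$. Let $L\rtimes N$ and $M\rtimes P$ be the semidirect products (with $N$ acting on $L$ via $\nu$), i.e. $(l,n)+(l',n')=(l+n\cdot l',n+n')$ and $(m,p)+(m',p')=(m+p\cdot m',p+p')$. Let $M\rtimes P$ act on $L\rtimes N$ by $(m,p)\cdot(l,n)=(m\cdot(p\cdot l)+h(m,p\cdot n),\ p\cdot n)$. Then $C_1=(L\rtimes N,M\rtimes P,\lambda\times\nu)$ and $C_0=(N,P,\nu)$ are crossed modules, and together with $s_A(l,n)=n$, $s_B(m,p)=p$, $t_A(l,n)=\lambda'(l)+n$, $t_B(m,p)=\mu(m)+p$, $\varepsilon_A(n)=(0,n)$, $\varepsilon_B(p)=(0,p)$ and compositions $(l',\lambda'(l)+n)\circ(l,n)=(l'+l,n)$, $(m',\mu(m)+p)\circ(m,p)=(m'+m,p)$, they form an internal category in $\mathsf{XMod}$.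
   Context: Groups are written additively. A crossed module $(A,B,\alpha)$: groups $A,B$, a left action of $B$ on $A$ by automorphisms, a homomorphism $\alpha:A\to B$ with $\alpha(b\cdot a)=b+\alpha(a)-b$ and $\alpha(a)\cdot a'=a+a'-a$. Morphisms $\langle f_A,f_B\rangle$ are pairs of homomorphisms with $f_B\alpha=\alpha'f_A$, $f_A(b\cdot a)=f_B(b)\cdot f_A(a)$. An internal category in $\mathsf{XMod}$ consists of crossed modules $C_1=(A_1,B_1,\alpha_1)$, $C_0=(A_0,B_0,\alpha_0)$ and crossed module morphisms $s=\langle s_A,s_B\rangle, t=\langle t_A,t_B\rangle:C_1\to C_0$, $\varepsilon=\langle\varepsilon_A,\varepsilon_B\rangle:C_0\to C_1$, $m=\langle m_A,m_B\rangle:C_1\,{}_s\!\times_t C_1\to C_1$ (pullback computed componentwise, pairs $(x,y)$ with $s(x)=t(y)$, componentwise action; $m(x,y)$ written $x\circ y$) satisfying $s\varepsilon=t\varepsilon=1$, $sm=s\pi_2$, $tm=t\pi_1$, associativity and unit laws $m(\varepsilon s,1)=m(1,\varepsilon t)=1$. A crossed square: homomorphisms $\lambda:L\to M$, $\lambda':L\to N$, $\mu:M\to P$, $\nu:N\to P$ with $\nu\lambda'=\mu\lambda$, left actions of $P$ on $L,M,N$ (inducing actions of $M$ on $L,N$ via $\mu$ and of $N$ on $L,M$ via $\nu$, e.g. $m\cdot l=\mu(m)\cdot l$), and $h:M\times N\to L$, such that (i) $\lambda,\lambda'$ are $P$-equivariant and $\mu$, $\nu$, $\mu\lambda$ are crossed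 modules; (ii) $\lambda h(m,n)=m+n\cdot(-m)$, $\lambda'h(m,n)=m\cdot n-n$; (iii) $h(\lambda(l),n)=l+n\cdot(-l)$, $h(m,\lambda'(l))=m\cdot l-l$; (iv) $h(m+m',n)=m\cdot h(m',n)+h(m,n)$, $h(m,n+n')=h(m,n)+n\cdot h(m,n')$; (v) $h(p\cdot m,p\cdot n)=p\cdot h(m,n)$. *)

(* Defs.v *)
Set Implicit Arguments.
Unset Strict Implicit.

Record GOps := { car :> Type; gadd : car -> car -> car; gzero : car; gopp : car -> car }.
Arguments gadd {g} _ _.
Arguments gzero {g}.
Arguments gopp {g} _.

Definition is_group (G : GOps) : Prop :=
  (forall x y z : G, gadd x (gadd y z) = gadd (gadd x y) z) /\
  (forall x : G, gadd gzero x = x) /\ (forall x : G, gadd x gzero = x) /\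
  (forall x : G, gadd (gopp x) x = gzero) /\ (forall x : G, gadd x (gopp x) = gzero).

Definition is_hom (G H : GOps) (f : G -> H) : Prop :=
  forall x y, f (gadd x y) = gadd (f x) (f y).

Definition is_action (B A : GOps) (act : B -> A -> A) : Prop :=
  (forall a, act gzero a = a) /\
  (forall b b' a, act (gadd b b') a = act b (act b' a)) /\
  (forall b a a', act b (gadd a a') = gadd (act b a) (act b a')).

Definition is_xmod (A B : GOps) (act : B -> A -> A) (alpha : A -> B) : Prop :=
  is_group A /\ is_group B /\ is_action act /\ is_hom alpha /\
  (forall b a, alpha (act b a) = gadd (gadd b (alpha a)) (gopp b)) /\
  (forall a a', act (alpha a) a' = gadd (gadd a a') (gopp a)).

Definition is_xmod_mor (A B : GOps) (act : B -> A -> A) (alpha : A -> B)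
  (A' B' : GOps) (act' : B' -> A' -> A') (alpha' : A' -> B')
  (fA : A -> A') (fB : B -> B') : Prop :=
  is_hom fA /\ is_hom fB /\
  (forall a, fB (alpha a) = alpha' (fA a)) /\
  (forall b a, fA (act b a) = act' (fB b) (fA a)).

(** The pullback C1 _s x_t C1 is the sub-crossed
    module of pairs (x,y) with s x = t y (componentwise operations and action);
    m = <mA, mB> is given by total binary functions, of which only the values on
    the pullback matter.  "m is a crossed-module morphism from the pullback" is
    written out componentwise. *)
Definition is_internal_cat
  (A1 B1 : GOps) (act1 : B1 -> A1 -> A1) (alpha1 : A1 -> B1)
  (A0 B0 : GOps) (act0 : B0 -> A0 -> A0) (alpha0 : A0 -> B0)
  (sA tA : A1 -> A0) (sB tB : B1 -> B0)
  (eA : A0 -> A1) (eB : B0 -> B1)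
  (mA : A1 -> A1 -> A1) (mB : B1 -> B1 -> B1) : Prop :=
  let pbA x y := sA x = tA y in
  let pbB x y := sB x = tB y in
  is_xmod act1 alpha1 /\ is_xmod act0 alpha0 /\
  is_xmod_mor act1 alpha1 act0 alpha0 sA sB /\
  is_xmod_mor act1 alpha1 act0 alpha0 tA tB /\
  is_xmod_mor act0 alpha0 act1 alpha1 eA eB /\
  (forall x y x' y', pbA x y -> pbA x' y' ->
      mA (gadd x x') (gadd y y') = gadd (mA x y) (mA x' y')) /\
  (forall x y x' y', pbB x y -> pbB x' y' ->
      mB (gadd x x') (gadd y y') = gadd (mB x y) (mB x' y')) /\
  (forall x y, pbA x y -> mB (alpha1 x) (alpha1 y) = alpha1 (mA x y)) /\
  (forall b b' x y, pbB b b' -> pbA x y ->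
      mA (act1 b x) (act1 b' y) = act1 (mB b b') (mA x y)) /\
  (forall a, sA (eA a) = a) /\ (forall b, sB (eB b) = b) /\
  (forall a, tA (eA a) = a) /\ (forall b, tB (eB b) = b) /\
  (forall x y, pbA x y -> sA (mA x y) = sA y) /\
  (forall x y, pbB x y -> sB (mB x y) = sB y) /\
  (forall x y, pbA x y -> tA (mA x y) = tA x) /\
  (forall x y, pbB x y -> tB (mB x y) = tB x) /\
  (forall x y z, pbA x y -> pbA y z -> mA (mA x y) z = mA x (mA y z)) /\
  (forall x y z, pbB x y -> pbB y z -> mB (mB x y) z = mB x (mB y z)) /\
  (forall x, mA (eA (tA x)) x = x) /\ (forall x, mA x (eA (sA x)) = x) /\
  (forall x, mB (eB (tB x)) x = x) /\ (forall x, mB x (eB (sB x)) = x).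

Definition is_crossed_square (L M N P : GOps)
  (lam : L -> M) (lam' : L -> N) (mu : M -> P) (nu : N -> P)
  (actL : P -> L -> L) (actM : P -> M -> M) (actN : P -> N -> N)
  (h : M -> N -> L) : Prop :=
  is_hom lam /\ is_hom lam' /\ is_hom mu /\ is_hom nu /\
  (forall l, nu (lam' l) = mu (lam l)) /\
  (* (i) *)
  (forall p l, lam (actL p l) = actM p (lam l)) /\
  (forall p l, lam' (actL p l) = actN p (lam' l)) /\
  is_xmod actM mu /\ is_xmod actN nu /\ is_xmod actL (fun l => mu (lam l)) /\
  (* (ii) *)
  (forall m n, lam (h m n) = gadd m (actM (nu n) (gopp m))) /\
  (forall m n, lam' (h m n) = gadd (actN (mu m) n) (gopp n)) /\
  (* (iii) *)
  (forall l n, h (lam l) n = gadd l (actL (nu n) (gopp l))) /\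
  (forall m l, h m (lam' l) = gadd (actL (mu m) l) (gopp l)) /\
  (* (iv) *)
  (forall m m' n, h (gadd m m') n = gadd (actL (mu m) (h m' n)) (h m n)) /\
  (forall m n n', h m (gadd n n') = gadd (h m n) (actL (nu n) (h m n'))) /\
  (* (v) *)
  (forall p m n, h (actM p m) (actN p n) = actL p (h m n)).

Definition sdp (G H : GOps) (act : H -> G -> G) : GOps :=
  {| car := (car G * car H)%type;
     gadd := fun x y => (gadd (fst x) (act (snd x) (fst y)), gadd (snd x) (snd y));
     gzero := (gzero, gzero);
     gopp := fun x => (act (gopp (snd x)) (gopp (fst x)), gopp (snd x)) |}.

(* Main.v *)
Require Import Defs.
From Stdlib Require Import Setoid.
Set Implicit Arguments.

Lemma gA (G : GOps) (HG : is_group G) (x y z : G) : gadd (gadd x y) z = gadd x (gadd y z).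
Proof. destruct HG as [a _]. now rewrite a. Qed.
Lemma g0l (G : GOps) (HG : is_group G) (x : G) : gadd gzero x = x.
Proof. apply HG. Qed.
Lemma g0r (G : GOps) (HG : is_group G) (x : G) : gadd x gzero = x.
Proof. apply HG. Qed.
Lemma gNl (G : GOps) (HG : is_group G) (x : G) : gadd (gopp x) x = gzero.
Proof. apply HG. Qed.
Lemma gNr (G : GOps) (HG : is_group G) (x : G) : gadd x (gopp x) = gzero.
Proof. apply HG. Qed.
Lemma gKl (G : GOps) (HG : is_group G) (x y : G) : gadd (gopp x) (gadd x y) = y.
Proof. now rewrite <- (gA HG), (gNl HG), (g0l HG). Qed.
Lemma gKr (G : GOps) (HG : is_group G) (x y : G) : gadd x (gadd (gopp x) y) = y.
Proof. now rewrite <- (gA HG), (gNr HG), (g0l HG). Qed.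
Lemma gcancel (G : GOps) (HG : is_group G) (x y z : G) : gadd x y = gadd x z -> y = z.
Proof. intro E. rewrite <- (gKl HG x y), E. apply (gKl HG). Qed.
Lemma gcancelr (G : GOps) (HG : is_group G) (x y z : G) : gadd y x = gadd z x -> y = z.
Proof. intro E. rewrite <- (g0r HG y), <- (gNr HG x), <- (gA HG), E, (gA HG), (gNr HG). apply (g0r HG). Qed.
Lemma ginv_uniq (G : GOps) (HG : is_group G) (x y : G) : gadd x y = gzero -> y = gopp x.
Proof. intro E. apply (gcancel HG x). now rewrite E, (gNr HG). Qed.
Lemma gNN (G : GOps) (HG : is_group G) (x : G) : gopp (gopp x) = x.
Proof. symmetry. apply ginv_uniq; auto. apply (gNl HG). Qed.
Lemma gN0 (G : GOps) (HG : is_group G) : gopp (gzero (g:=G)) = gzero.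
Proof. symmetry. apply ginv_uniq; auto. apply (g0l HG). Qed.
Lemma gND (G : GOps) (HG : is_group G) (x y : G) : gopp (gadd x y) = gadd (gopp y) (gopp x).
Proof. symmetry. apply ginv_uniq; auto. rewrite (gA HG), (gKr HG). apply (gNr HG). Qed.

Lemma act_0 (A B : GOps) (HA : is_group A) (act : B -> A -> A) (Hact : is_action act) b :
  act b gzero = gzero.
Proof. destruct Hact as [_ [_ h]]. apply (gcancel HA (act b gzero)).
  rewrite <- h, !(g0r HA). reflexivity. Qed.
Lemma act_opp (A B : GOps) (HA : is_group A) (act : B -> A -> A) (Hact : is_action act) b a :
  act b (gopp a) = gopp (act b a).
Proof. apply ginv_uniq; auto. rewrite <- (proj2 (proj2 Hact)), (gNr HA).
  apply (act_0 HA Hact). Qed.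
Lemma act_K (A B : GOps) (HB : is_group B) (act : B -> A -> A) (Hact : is_action act) b a :
  act (gopp b) (act b a) = a.
Proof. destruct Hact as [h0 [h1 _]]. now rewrite <- h1, (gNl HB), h0. Qed.
Lemma act_KV (A B : GOps) (HB : is_group B) (act : B -> A -> A) (Hact : is_action act) b a :
  act b (act (gopp b) a) = a.
Proof. destruct Hact as [h0 [h1 _]]. now rewrite <- h1, (gNr HB), h0. Qed.
Lemma act_l (A B : GOps) (act : B -> A -> A) (Hact : is_action act) b b' a :
  act (gadd b b') a = act b (act b' a).
Proof. apply Hact. Qed.
Lemma act_r (A B : GOps) (act : B -> A -> A) (Hact : is_action act) b a a' :
  act b (gadd a a') = gadd (act b a) (act b a').
Proof. apply Hact. Qed.
Lemma act_0l (A B : GOps) (act : B -> A -> A) (Hact : is_action act) a :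
  act gzero a = a.
Proof. apply Hact. Qed.

Lemma hom0 (G H : GOps) (HG : is_group G) (HH : is_group H) (f : G -> H) (Hf : is_hom f) :
  f gzero = gzero.
Proof. apply (gcancel HH (f gzero)). rewrite <- Hf, !(g0r HH), (g0r HG). reflexivity. Qed.
Lemma homN (G H : GOps) (HG : is_group G) (HH : is_group H) (f : G -> H) (Hf : is_hom f) x :
  f (gopp x) = gopp (f x).
Proof. apply ginv_uniq; auto. rewrite <- Hf, (gNr HG). apply (hom0 HG HH Hf). Qed.

Lemma sdp_group (G H : GOps) (HG : is_group G) (HH : is_group H) (act : H -> G -> G)
  (Hact : is_action act) : is_group (sdp act).
Proof.
  repeat split.
  - intros [g k] [g' k'] [g'' k'']; simpl. f_equal.
    + rewrite (act_r Hact), (act_l Hact). symmetry; apply (gA HG).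
    + symmetry; apply (gA HH).
  - intros [g k]; simpl. f_equal. rewrite (act_0l Hact). apply (g0l HG). apply (g0l HH).
  - intros [g k]; simpl. f_equal. rewrite (act_0 HG Hact). apply (g0r HG). apply (g0r HH).
  - intros [g k]; simpl. f_equal. rewrite <- (act_r Hact), (gNl HG). apply (act_0 HG Hact).
    apply (gNl HH).
  - intros [g k]; simpl. f_equal. rewrite (act_KV HH Hact). apply (gNr HG). apply (gNr HH).
Qed.
Theorem mainTheorem3 (L M N P : GOps)
  (lam : L -> M) (lam' : L -> N) (mu : M -> P) (nu : N -> P)
  (actL : P -> L -> L) (actM : P -> M -> M) (actN : P -> N -> N)
  (h : M -> N -> L) :
  is_crossed_square lam lam' mu nu actL actM actN h ->
  let LN := sdp (fun (n : N) (l : L) => actL (nu n) l) in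
  let MP := sdp actM in
  let act1 : MP -> LN -> LN := fun mp ln =>
    (gadd (actL (mu (fst mp)) (actL (snd mp) (fst ln)))
          (h (fst mp) (actN (snd mp) (snd ln))),
     actN (snd mp) (snd ln)) in
  let alpha1 : LN -> MP := fun ln => (lam (fst ln), nu (snd ln)) in
  is_internal_cat act1 alpha1 actN nu
    (fun ln : LN => snd ln) (fun ln : LN => gadd (lam' (fst ln)) (snd ln))
    (fun mp : MP => snd mp) (fun mp : MP => gadd (mu (fst mp)) (snd mp))
    (fun n : N => (gzero, n) : LN) (fun p : P => (gzero, p) : MP)
    (fun x y : LN => (gadd (fst x) (fst y), snd y) : LN)
    (fun x y : MP => (gadd (fst x) (fst y), snd y) : MP).
Proof.
  intros H LN MP act1 alpha1.
  destruct H as [lamH [lam'H [muH [nuH [comm [lamE [lam'E [XM [XN [XL [ii1 [ii2 [iii1 [iii2 [iv1 [iv2 v]]]]]]]]]]]]]]]].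
  pose proof XM as [GM [GP [AM [_ [muE cM]]]]].
  pose proof XN as [GN [_ [AN [_ [nuE cN]]]]].
  pose proof XL as [GL [_ [AL [_ [_ cL]]]]].
  assert (ALN : is_action (fun (n : N) (l : L) => actL (nu n) l)).
  { split; [|split].
    - intro a. rewrite (hom0 GN GP nuH). apply (act_0l AL).
    - intros. rewrite nuH. apply (act_l AL).
    - intros. apply (act_r AL). }
  assert (GLN : is_group LN) by (apply sdp_group; auto).
  assert (GMP : is_group MP) by (apply sdp_group; auto).
  assert (mu0 : mu gzero = gzero) by apply (hom0 GM GP muH).
  assert (nu0 : nu gzero = gzero) by apply (hom0 GN GP nuH).
  assert (lam0 : lam gzero = gzero) by apply (hom0 GL GM lamH).
  assert (lam'0 : lam' gzero = gzero) by apply (hom0 GL GN lam'H).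
  assert (nuN : forall x, nu (gopp x) = gopp (nu x)) by apply (homN GN GP nuH).
  assert (muN : forall x, mu (gopp x) = gopp (mu x)) by apply (homN GM GP muH).
  assert (h0l : forall n, h gzero n = gzero).
  { intro n. pose proof (iv1 gzero gzero n) as E. rewrite (g0l GM), mu0, (act_0l AL) in E.
    apply (gcancelr GL (h gzero n)). rewrite (g0l GL). symmetry; exact E. }
  assert (hkey : forall m1 m2 q, h (gadd m1 m2) q = gadd (h m1 (actN (mu m2) q)) (h m2 q)).
  { intros m1 m2 q.
    assert (E : gadd m1 m2 = gadd m2 (actM (gopp (mu m2)) m1)).
    { rewrite <- (act_KV GP AM (mu m2) m1) at 1. rewrite cM.
      rewrite !(gA GM), (gNl GM), (g0r GM). reflexivity. }
    rewrite E, iv1, <- v, (act_KV GP AM). reflexivity. }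
  assert (CL : forall m n y z, gadd (actL (mu m) (actL (nu n) y)) (gadd (h m n) z)
                 = gadd (h m n) (gadd (actL (nu n) (actL (mu m) y)) z)).
  { intros m n y z.
    assert (E : actL (mu m) (actL (nu n) y) = gadd (gadd (h m n) (actL (nu n) (actL (mu m) y))) (gopp (h m n))).
    { rewrite <- cL, ii1, muH, muE, muN, !(act_l AL), (act_K GP AL), (act_K GP AL). reflexivity. }
    rewrite E, !(gA GL), (gKl GL). reflexivity. }
  assert (conjL : forall p n x, actL p (actL (nu n) x) = actL (nu (actN p n)) (actL p x)).
  { intros p n x. rewrite nuE, !(act_l AL), (act_K GP AL). reflexivity. }
  unfold is_internal_cat, is_xmod, is_xmod_mor.
  repeat (assumption || split).
  all: subst LN MP act1 alpha1.
  Ltac norm GL GM GN GP := rewrite ?(gA GL), ?(gA GM), ?(gA GN), ?(gA GP).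
  - intros [l n]; simpl. rewrite mu0, !(act_0l AL), !(act_0l AN), h0l, (g0r GL). reflexivity.
  - intros [m p] [m' p'] [l n]; simpl.
    rewrite iv1, !(act_l AN), v, muH, muE, !(act_l AL), (act_K GP AL), !(act_r AL).
    norm GL GM GN GP. reflexivity.
  - intros [m p] [l n] [l' n']; simpl.
    rewrite !(act_r AL), !(act_r AN), iv2, conjL.
    norm GL GM GN GP. rewrite CL. reflexivity.
  - intros [l n] [l' n']; simpl. rewrite lamH, lamE, nuH. reflexivity.
  - intros [m p] [l n]; simpl.
    rewrite lamH, !lamE, cM, ii1, nuE, !(act_l AM). norm GL GM GN GP. rewrite (gKl GM). reflexivity.
  - intros [l n] [l' n']; simpl.
    rewrite cL, iii1, cN, !nuH, !nuN, !(act_l AL). norm GL GM GN GP. rewrite (gKl GL). reflexivity.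
  - intros [l n] [l' n']; simpl. rewrite lam'H, lam'E, cN. norm GL GM GN GP. rewrite (gKl GN). reflexivity.
  - intros [m p] [m' p']; simpl. rewrite muH, muE. norm GL GM GN GP. rewrite (gKl GP). reflexivity.
  - intros [l n]; simpl. rewrite nuH, comm. reflexivity.
  - intros [m p] [l n]; simpl.
    rewrite lam'H, !lam'E, ii2, !(act_l AN), !(act_r AN). norm GL GM GN GP.
    rewrite (gNl GN), (g0r GN). reflexivity.
  - intros n n'; simpl. rewrite (act_0 GL AL), (g0l GL). reflexivity.
  - intros n n'; simpl. rewrite (act_0 GM AM), (g0l GM). reflexivity.
  - intros n; simpl. rewrite lam0. reflexivity.
  - intros p n; simpl. rewrite mu0, (act_0l AL), (act_0 GL AL), h0l, (g0l GL). reflexivity.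
  - intros [l1 n1] [l2 n2] [l1' n1'] [l2' n2']; simpl; intros E1 E2; subst n1 n1'.
    rewrite nuH, comm, (act_l AL), cL, (act_r AL). norm GL GM GN GP. rewrite (gKl GL). reflexivity.
  - intros [l1 n1] [l2 n2] [l1' n1'] [l2' n2']; simpl; intros E1 E2; subst n1 n1'.
    rewrite (act_l AM), cM, (act_r AM). norm GL GM GN GP. rewrite (gKl GM). reflexivity.
  - intros [l1 n1] [l2 n2]; simpl; intros _. rewrite lamH. reflexivity.
  - intros [m1 p1] [m2 p2] [l1 n1] [l2 n2]; simpl; intros E1 E2; subst p1 n1.
    rewrite !(act_l AN), !(act_r AN), <- !lam'E, iv2, iii2, comm, cL, muH, !(act_l AL), !(act_r AL), hkey.
    norm GL GM GN GP. rewrite !(gKl GL). reflexivity.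
  - intros n; simpl. rewrite lam'0, (g0l GN). reflexivity.
  - intros p; simpl. rewrite mu0, (g0l GP). reflexivity.
  - intros [l1 n1] [l2 n2]; simpl; intros E; subst. rewrite lam'H. norm GL GM GN GP. reflexivity.
  - intros [l1 n1] [l2 n2]; simpl; intros E; subst. rewrite muH. norm GL GM GN GP. reflexivity.
  - intros [l1 n1] [l2 n2] [l3 n3]; simpl; intros _ _. rewrite (gA GL). reflexivity.
  - intros [l1 n1] [l2 n2] [l3 n3]; simpl; intros _ _. rewrite (gA GM). reflexivity.
  - intros [l n]; simpl. rewrite (g0l GL). reflexivity.
  - intros [l n]; simpl. rewrite (g0r GL). reflexivity.
  - intros [l n]; simpl. rewrite (g0l GM). reflexivity.
  - intros [l n]; simpl. rewrite (g0r GM). reflexivity.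
Qed.
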